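(* Let $\sigma_1$ and $\sigma_2$ be compositions of the positive integers $m_1$ and $m_2$ respectively. If $\Gamma(\mathsf{hypo},\sigma_1)$ and $\Gamma(\mathsf{hypo},\sigma_2)$ are isomorphic as unlabelled directed graphs, then $m_1=m_2$.
   Context: A quasi-ribbon tableau of shape $\sigma=(\sigma_1,\dots,\sigma_r)$ (a composition) is a filling with positive integers of the diagram having $\sigma_i$ cells in row $i$, the leftmost cell of row $i+1$ directly below the rightmost cell of row $i$, with entries weakly increasing along rows and strictly increasing down columns. Its column reading is the word obtained by reading columns left to right, each column bottom to top. Quasi-Kashiwara operator $f_i$ ($i\ge1$) on a word $u$ over the positive integers: undefined if $u$ contains a (not necessarily consecutive) subsequence $(i+1)\,i$ or contains no letter $i$; otherwise $f_i(u)$ replaces the rightmost $i$ by $i+1$. $\Gamma(\mathsf{hypo},\sigma)$ is the directed graph whose vertices are the quasi-ribbon tableaux of shape $\sigma$ (identified with their column readings), with an edge $u\to f_i(u)$ labelled $i$ whenever $f_i(u)$ is defined. *)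

(* Defs.v *)
From mathcomp Require Import all_boot.
Set Implicit Arguments. Unset Strict Implicit. Unset Printing Implicit Defensive.

Definition composition (sigma : seq nat) (m : nat) : Prop :=
  all (fun p => 0 < p) sigma /\ sumn sigma = m.

(* Column (0-based) of the leftmost cell of row i (0-based): since the
   leftmost cell of row i+1 sits directly below the rightmost cell of row i,
   c_0 = 0 and c_{i+1} = c_i + sigma_i - 1. *)
Definition row_start (sigma : seq nat) (i : nat) : nat :=
  sumn (take i sigma) - i.

(* A filling T of the diagram of shape sigma is given as its list of rows
   (top to bottom), row i being the left-to-right entries of row i. *)
Definition qrt (sigma : seq nat) (T : seq (seq nat)) : Prop :=
  [/\ size T = size sigma,
      forall i, i < size sigma -> size (nth [::] T i) = nth 0 sigma i,
      forall i, i < size sigma -> all (fun x => 0 < x) (nth [::] T i),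
      forall i, i < size sigma -> sorted leq (nth [::] T i)
    & (* strictly increasing down columns: the only vertical adjacency is
         the rightmost cell of row i above the leftmost cell of row i+1 *)
      forall i, i.+1 < size sigma ->
        last 0 (nth [::] T i) < head 0 (nth [::] T i.+1)].

Definition column_word (sigma : seq nat) (T : seq (seq nat)) (k : nat) : seq nat :=
  rev [seq nth 0 (nth [::] T i) (k - row_start sigma i)
      | i <- iota 0 (size sigma) &
        (row_start sigma i <= k) && (k < row_start sigma i + nth 0 sigma i)].

(* Column reading: columns left to right (columns beyond the width are empty). *)
Definition column_reading (sigma : seq nat) (T : seq (seq nat)) : seq nat :=
  flatten [seq column_word sigma T k | k <- iota 0 (sumn sigma)].

Definition qk_f (i : nat) (u : seq nat) : option (seq nat) :=
  if subseq [:: i.+1; i] u || (i \notin u) then None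
  else Some (set_nth 0 u (size u - (index i (rev u)).+1) i.+1).

Definition hypo_vertex (sigma : seq nat) (w : seq nat) : Prop :=
  exists T, qrt sigma T /\ column_reading sigma T = w.

Definition hypo_edge (sigma : seq nat) (u v : seq nat) : Prop :=
  hypo_vertex sigma u /\ hypo_vertex sigma v /\
  exists i, 0 < i /\ qk_f i u = Some v.

Definition hypo_graph_iso (s1 s2 : seq nat) : Prop :=
  exists (phi psi : seq nat -> seq nat),
    [/\ forall u, hypo_vertex s1 u -> hypo_vertex s2 (phi u),
        forall v, hypo_vertex s2 v -> hypo_vertex s1 (psi v),
        forall u, hypo_vertex s1 u -> psi (phi u) = u,
        forall v, hypo_vertex s2 v -> phi (psi v) = v
      & forall u v, hypo_vertex s1 u -> hypo_vertex s1 v ->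
          (hypo_edge s1 u v <-> hypo_edge s2 (phi u) (phi v))].

Example ex_cr : column_reading [:: 2; 2] [:: [:: 1; 2]; [:: 3; 3]] = [:: 1; 3; 2; 3].
Proof. by []. Qed.
Example ex_f : qk_f 1 [:: 1; 2; 1] = None /\ qk_f 1 [:: 1; 1; 2] = Some [:: 1; 2; 2].
Proof. by []. Qed.

(* Main.v *)
Require Import Defs.
From mathcomp Require Import all_boot zify.
Set Implicit Arguments. Unset Strict Implicit. Unset Printing Implicit Defensive.

Definition Pk (s : seq nat) k i :=
  (row_start s i <= k) && (k < row_start s i + nth 0 s i).

Definition pos (s : seq nat) : seq (nat * nat) :=
  [seq (k, i) | k <- iota 0 (sumn s), i <- rev [seq i <- iota 0 (size s) | Pk s k i]].

Lemma reading_pos s T : column_reading s T =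
  [seq nth 0 (nth [::] T p.2) (p.1 - row_start s p.2) | p <- pos s].
Proof.
rewrite /column_reading /pos map_flatten -map_comp; congr flatten; apply: eq_map => k /=.
by rewrite /column_word !map_rev -map_comp.
Qed.

Lemma mem_pos s p : p \in pos s ->
  [/\ p.2 < size s, row_start s p.2 <= p.1 & p.1 < row_start s p.2 + nth 0 s p.2].
Proof.
case/allpairsPdep => k [i [_ Hi ->]] /=.
move: Hi; rewrite mem_rev mem_filter mem_iota /Pk => /andP [/andP [H1 H2] /andP [_ H3]].
by split.
Qed.

Lemma uniq_pos s : uniq (pos s).
Proof.
apply: allpairs_uniq_dep.
- exact: iota_uniq.
- by move=> k _; rewrite rev_uniq filter_uniq // iota_uniq.
- by move=> [a b] [c d] _ _ /= [-> ->].
Qed.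

Lemma count_iota a b N : count (fun k => (a <= k) && (k < a + b)) (iota 0 N) = minn N (a + b) - minn N a.
Proof.
elim: N => [|N IH]; first by rewrite /= !min0n.
rewrite -addn1 iotaD count_cat IH /= add0n addn0.
case: (boolP ((a <= N) && (N < a + b))) => /= H; lia.
Qed.

Lemma take_row_bound s i : i < size s -> sumn (take i s) + nth 0 s i <= sumn s.
Proof.
move=> Hi; rewrite -sumn_rcons -(take_nth 0 Hi).
by rewrite -{2}(cat_take_drop i.+1 s) sumn_cat leq_addr.
Qed.

Lemma size_pos s : size (pos s) = sumn s.
Proof.
rewrite /pos size_flatten /shape -map_comp.
have -> : [seq (size \o (fun k => [seq (k, i) | i <- rev [seq i <- iota 0 (size s) | Pk s k i]])) k | k <- iota 0 (sumn s)]
   = [seq \sum_(i <- iota 0 (size s)) (Pk s k i : nat) | k <- iota 0 (sumn s)].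
  apply: eq_map => k /=; rewrite size_map size_rev size_filter -sum1_count big_mkcond /=.
  by apply: eq_bigr => i _; case: (Pk s k i).
rewrite sumnE big_map exchange_big /=.
transitivity (\sum_(i <- iota 0 (size s)) nth 0 s i); last first.
  by rewrite -[in RHS](mkseq_nth 0 s) sumnE big_map.
apply: eq_big_seq => i; rewrite mem_iota add0n => /= Hi.
rewrite -big_mkcond /= sum1_count /Pk count_iota.
have := take_row_bound Hi; rewrite /row_start; lia.
Qed.

Definition mkT (s : seq nat) (g : nat -> nat -> nat) : seq (seq nat) :=
  [seq [seq g i j | j <- iota 0 (nth 0 s i)] | i <- iota 0 (size s)].

Lemma nth_mkT s g i j : i < size s -> j < nth 0 s i ->
  nth 0 (nth [::] (mkT s g) i) j = g i j.
Proof.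
move=> Hi Hj.
rewrite /mkT (nth_map 0) ?size_iota // nth_iota // add0n.
by rewrite (nth_map 0) ?size_iota // nth_iota.
Qed.

Lemma nth_mkT_row s g i : i < size s ->
  nth [::] (mkT s g) i = [seq g i j | j <- iota 0 (nth 0 s i)].
Proof. by move=> Hi; rewrite /mkT (nth_map 0) ?size_iota // nth_iota. Qed.

Lemma qrt_mk s g : all (fun p => 0 < p) s ->
  (forall i j, 0 < g i j) ->
  (forall i j j', j <= j' -> g i j <= g i j') ->
  (forall i, i.+1 < size s -> g i (nth 0 s i).-1 < g i.+1 0) ->
  qrt s (mkT s g).
Proof.
move=> Hs Hpos Hmono Hstep; split.
- by rewrite size_map size_iota.
- by move=> i Hi; rewrite nth_mkT_row // size_map size_iota.
- move=> i Hi; rewrite nth_mkT_row //; apply/allP => x /mapP [j _ ->]; exact: Hpos.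
- move=> i Hi; rewrite nth_mkT_row // sorted_map.
  apply: (sub_sorted _ (iota_sorted 0 _)) => a b /= Hab; exact: Hmono.
- move=> i Hi; rewrite !nth_mkT_row //; last by apply: ltnW.
  have Hp : forall k, k < size s -> 0 < nth 0 s k.
    by move=> k Hk; apply: (allP Hs); rewrite mem_nth.
  have Hi' : i < size s by apply: ltnW.
  case E1 : (nth 0 s i) (Hp i Hi') => [|n1] // _.
  case E2 : (nth 0 s i.+1) (Hp i.+1 Hi) => [|n2] // _.
  rewrite -nth_last size_map size_iota (nth_map 0) ?size_iota // nth_iota //=.
  by have := Hstep i Hi; rewrite E1.
Qed.

Lemma reading_mk s g : column_reading s (mkT s g) =
  [seq g p.2 (p.1 - row_start s p.2) | p <- pos s].
Proof.
rewrite reading_pos; apply/eq_in_map => p /mem_pos [H1 H2 H3].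
rewrite nth_mkT //; move: H1 H2 H3; case: p => a b /= *; lia.
Qed.

Lemma vertex_size s u : hypo_vertex s u -> size u = sumn s.
Proof. by case=> T [_ <-]; rewrite reading_pos size_map size_pos. Qed.

Lemma upper s u vs : hypo_vertex s u -> uniq vs ->
  (forall v, v \in vs -> exists i, qk_f i u = Some v) -> size vs <= sumn s.
Proof.
move=> Hu Hvs H; rewrite -(vertex_size Hu) -(size_map (fun i => odflt [::] (qk_f i u)) u).
apply: uniq_leq_size => // v /H [i Hi]; apply/mapP; exists i; last by rewrite Hi.
case Hin : (i \in u) => //; move: Hi; by rewrite /qk_f Hin orbT.
Qed.

Lemma index_rev_uniq (u : seq nat) (x : nat) : uniq u -> x \in u ->
  index x (rev u) = size u - (index x u).+1.
Proof.
move=> Uu xu; have Hi : index x u < size u by rewrite index_mem.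
have E : nth 0 (rev u) (size u - (index x u).+1) = x.
  rewrite nth_rev; last by lia.
  rewrite (_ : size u - (size u - (index x u).+1).+1 = index x u) ?nth_index //; clear -Hi; move: Hi; move: (index x u) (size u) => k n; lia.
rewrite -{1}E index_uniq ?size_rev ?rev_uniq // ltn_subrL andTb; exact: leq_ltn_trans Hi.
Qed.

Lemma set_nth_uniq (u : seq nat) (x y : nat) : uniq u -> x \in u ->
  set_nth 0 u (index x u) y = map (fun z => if z == x then y else z) u.
Proof.
elim: u => [|a u IH] //= /andP [au Uu].
case: (eqVneq a x) => [<-|ne] xu /=.
- congr cons; symmetry; apply: map_id_in => z zu.
  case: eqP => // za; by move: au; rewrite -za zu.
- have xu' : x \in u by move: xu; rewrite inE eq_sym (negbTE ne).
  by rewrite IH.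
Qed.

Lemma divmod_inj B a a' j j' : j < B -> j' < B -> a * B + j = a' * B + j' -> a = a' /\ j = j'.
Proof.
move=> Hj Hj' E.
have B0 : 0 < B by lia.
have E1 := congr1 (fun x => x %/ B) E; have E2 := congr1 (fun x => x %% B) E.
move: E1 E2 => /=; rewrite !divnMDl // !divn_small // !modnMDl !modn_small //.
by rewrite !addn0 => -> ->.
Qed.

Lemma subsub n k : k < n -> n - (n - k.+1).+1 = k.
Proof. lia. Qed.

Definition hh x y := if y == x then x.+1 else y.

Lemma lower s : all (fun p => 0 < p) s -> exists u, hypo_vertex s u /\
  exists vs, [/\ size vs = sumn s, uniq vs & forall v, v \in vs -> hypo_edge s u v].
Proof.
move=> Hs.
set B := sumn s.
pose V i j := 2 * (i * B + j + 1).
pose G (p : nat * nat) := V p.2 (p.1 - row_start s p.2).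
pose u := map G (pos s).
have Hp : forall k, k < size s -> 0 < nth 0 s k <= B.
  move=> k Hk; rewrite (allP Hs) ?mem_nth //=; have := take_row_bound Hk; rewrite /B; lia.
have qrtf : forall f, (forall y y', y <= y' -> f y <= f y') ->
    (forall y y', y.+2 <= y' -> f y < f y') -> (forall y, y <= f y) ->
    qrt s (mkT s (fun i j => f (V i j))).
  move=> f f1 f2 f3; apply: qrt_mk => //.
  - move=> i j; apply: leq_trans (f3 _); rewrite /V; lia.
  - by move=> i j j' Hj; apply: f1; rewrite /V; lia.
  - move=> i Hi; apply: f2; have := Hp i (ltnW Hi); rewrite /V mulSn; lia.
have vu : hypo_vertex s u.
  exists (mkT s (fun i j => id (V i j))); split; last by rewrite reading_mk.
  apply: (qrtf id) => [y y'|y y'|y] /=; lia.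
have Ginj : {in pos s &, injective G}.
  move=> [a b] [c d] /mem_pos /= [H1 H2 H3] /mem_pos /= [H4 H5 H6].
  rewrite /G /V /= => E.
  have E' : b * B + (a - row_start s b) = d * B + (c - row_start s d) by lia.
  have := Hp _ H1; have := Hp _ H4 => P1 P2.
  case: (divmod_inj _ _ E'); [lia|lia|] => bd; subst d => ac.
  congr pair; lia.
have Uu : uniq u by rewrite map_inj_in_uniq // uniq_pos.
have ev : forall y, y \in u -> exists n, y = 2 * n.+1.
  move=> y /mapP [p _ ->]; rewrite /G /V; eexists; rewrite addn1; reflexivity.
exists u; split => //.
exists [seq map (hh x) u | x <- u]; split.
- by rewrite size_map /u size_map size_pos.
- rewrite map_inj_in_uniq // => x y xu yu E.
  have : x.+1 \in map (hh x) u by apply/mapP; exists x => //; rewrite /hh eqxx.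
  rewrite E => /mapP [z zu]; rewrite /hh; case: eqP => [_ [] //|_ Ez].
  have [n1 E1] := ev _ xu; have [n2 E2] := ev _ zu; lia.
- move=> v /mapP [x xu ->]; split => //; split.
    exists (mkT s (fun i j => hh x (V i j))); split.
    + apply: qrtf; rewrite /hh.
      * move=> y y' Hy; case: eqP => Hyx; case: eqP => Hy'x; lia.
      * move=> y y' Hy; case: eqP => Hyx; case: eqP => Hy'x; lia.
      * by move=> y; case: eqP => // ->.
    + by rewrite reading_mk /u -map_comp.
  exists x; split; first by have [n ->] := ev _ xu; lia.
  rewrite /qk_f xu /= orbF.
  have -> : subseq [:: x.+1; x] u = false.
    apply/negP => /mem_subseq H; have := H x.+1; rewrite inE eqxx => /(_ isT) Hx.
    have [n1 E1] := ev _ xu; have [n2 E2] := ev _ Hx; lia.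
  rewrite index_rev_uniq // (_ : size u - (size u - (index x u).+1).+1 = index x u)
    ?set_nth_uniq //; apply: subsub; by rewrite index_mem.
Qed.

Theorem corollary4p4 (m1 m2 : nat) (sigma1 sigma2 : seq nat) :
  0 < m1 -> 0 < m2 ->
  composition sigma1 m1 -> composition sigma2 m2 ->
  hypo_graph_iso sigma1 sigma2 ->
  m1 = m2.
Proof.
move=> _ _ [P1 S1] [P2 S2] [phi [psi [V1 V2 K1 K2 E]]].
subst m1 m2; apply/eqP; rewrite eqn_leq; apply/andP; split.
- have [u [vu [vs [Hs Uvs Hvs]]]] := lower P1.
  rewrite -Hs -(size_map phi).
  apply: (upper (u := phi u)); first exact: V1.
  + rewrite map_inj_in_uniq // => a b ain bin Eab.
    have [_ [va _]] := Hvs _ ain; have [_ [vb _]] := Hvs _ bin.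
    by rewrite -(K1 _ va) Eab K1.
  + move=> w /mapP [v vin ->].
    have Hv := Hvs _ vin; have [_ [vv _]] := Hv.
    by have [_ [_ [i [_ Hi]]]] := (E u v vu vv).1 Hv; exists i.
- have [u [vu [vs [Hs Uvs Hvs]]]] := lower P2.
  rewrite -Hs -(size_map psi).
  apply: (upper (u := psi u)); first exact: V2.
  + rewrite map_inj_in_uniq // => a b ain bin Eab.
    have [_ [va _]] := Hvs _ ain; have [_ [vb _]] := Hvs _ bin.
    by rewrite -(K2 _ va) Eab K2.
  + move=> w /mapP [v vin ->].
    have Hv := Hvs _ vin; have [_ [vv _]] := Hv.
    have Hv' : hypo_edge sigma2 (phi (psi u)) (phi (psi v)) by rewrite !K2.
    by have [_ [_ [i [_ Hi]]]] := (E _ _ (V2 _ vu) (V2 _ vv)).2 Hv'; exists i.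
Qed.
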